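(* Let $G$ be a finite solvable group with $\mathcal{I}(G)\neq G$. Then $\Sigma(G)\neq\emptyset$, i.e. $G$ contains an element whose order is divisible by at least two distinct primes.
   Context: For a finite group $G$, let $\widetilde{\Gamma}(G)$ be the graph with vertex set $G$ in which two distinct elements $x,y$ are adjacent if and only if $|\langle x,y\rangle|$ is divisible by at least three distinct primes. $\mathcal{I}(G)$ denotes the set of isolated vertices of $\widetilde{\Gamma}(G)$. $\Sigma(G)$ denotes the set of elements $g\in G$ whose order is divisible by at least two distinct primes. *)

(* Defs.v *)
From mathcomp Require Import all_boot all_fingroup all_solvable.
Set Implicit Arguments. Unset Strict Implicit. Unset Printing Implicit Defensive.
Local Open Scope group_scope.

Definition tadj (gT : finGroupType) (x y : gT) : bool :=
  (x != y) && (2 < size (primes #|<<[set x; y]>>|))%N.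

Definition isolated_set (gT : finGroupType) (G : {group gT}) : {set gT} :=
  [set x in G | [forall y in G, ~~ tadj x y]].

Definition Sigma (gT : finGroupType) (G : {group gT}) : {set gT} :=
  [set g in G | (1 < size (primes #[g]))%N].

(* Main.v *)
Require Import Defs.
From mathcomp Require Import all_boot all_fingroup all_solvable.
From mathcomp Require Import all_algebra mxrepresentation mxabelem.
From mathcomp Require Import zify.
Set Implicit Arguments. Unset Strict Implicit. Unset Printing Implicit Defensive.
Import GRing.Theory.
Local Open Scope group_scope.

Section KeyS.
Variables (gT : finGroupType) (p : nat) (E L A : {group gT}) (y : gT).
Hypotheses (pr_p : prime p) (abelE : p.-abelem E) (ntE : E :!=: 1) (nEL : L \subset 'N(E)).
Hypothesis hC : forall g, g \in L -> g != 1 -> 'C_E[g] = 1.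
Hypotheses (sAL : A \subset L) (ntA : A :!=: 1) (pA : ~~ (p %| #|A|)).
Hypotheses (yL : y \in L) (nty : y != 1) (nAy : y \in 'N(A)).
Hypothesis hA : forall c a, c \in <[y]> -> c != 1 -> a \in A -> commute a c -> a = 1.

Local Notation rG := (abelem_repr abelE ntE nEL).

Lemma sum_zero (B : {group gT}) (u : 'rV(E)) : B \subset L -> B :!=: 1 ->
  (\sum_(b in B) u *m rG b = 0)%R.
Proof.
move=> sBL ntB; set w := (\sum_(b in B) _)%R.
have /trivgPn [c cB ntc] := ntB.
have cL : c \in L := subsetP sBL c cB.
have wc : (w *m rG c = w)%R.
  rewrite {2}/w (reindex_astabs 'R c) ?astabsR //= /w mulmx_suml.
  apply: eq_bigr => b bB /=.
  by rewrite repr_mxM ?(subsetP sBL) // mulmxA.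
have : rVabelem abelE ntE w \in 'C_E[c].
  apply/setIP; split; first exact: mem_rVabelem.
  apply/cent1P/commgP/conjg_fixP.
  by rewrite -(rVabelemJ _ _ nEL) // wc.
rewrite hC // inE => /eqP h.
by rewrite -[w](rVabelemK abelE ntE) h abelem_rV_1.
Qed.

Lemma key : False.
Proof.
have /trivgPn [x xE ntx] := ntE.
set u := abelem_rV abelE ntE x.
have yN : <[y]> \subset L by rewrite cycle_subG.
have nty' : <[y]> :!=: 1 by rewrite cycle_eq1.
have S1 : forall a, a \in A -> (\sum_(c in <[y]>) u *m rG (c ^ a)%g = 0)%R.
  move=> a aA; have aL := subsetP sAL a aA.
  transitivity (\sum_(c in <[y]>) (u *m rG (a^-1)%g) *m rG c *m rG a)%R.
    apply: eq_bigr => c cy; have cL := subsetP yN c cy.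
    by rewrite conjgE !repr_mxM ?groupM ?groupV // !mulmxA.
  by rewrite -mulmx_suml sum_zero // mul0mx.
have S2 : forall c, c \in <[y]> -> c != 1 -> (\sum_(a in A) u *m rG (c ^ a)%g = 0)%R.
  move=> c cy ntc; have cL := subsetP yN c cy.
  have cN : c \in 'N(A) by apply: (subsetP _ c cy); rewrite cycle_subG.
  pose phi a := a^-1 * (c * a * c^-1).
  have phiA : forall a, a \in A -> phi a \in A.
    move=> a aA; rewrite groupM ?groupV //.
    by have := memJ_norm a (groupVr cN); rewrite conjgE invgK mulgA => ->.
  have injphi : {in A &, injective phi}.
    move=> a b aA bA; rewrite /phi => /(congr1 (fun z => z * c)).
    rewrite -!mulgA !mulVg !mulg1 => h.
    have : commute (a * b^-1) c.
      rewrite /commute.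
      have h2 : c * a = a * (b^-1 * (c * b)) by rewrite -h mulKVg.
      by rewrite mulgA h2 -!mulgA mulgV mulg1.
    move/(hA cy ntc (groupM aA (groupVr bA)))/eqP.
    by rewrite -eq_mulgV1 => /eqP.
  have imphi : phi @: A = A.
    apply/eqP; rewrite eqEcard card_in_imset // leqnn andbT.
    by apply/subsetP => _ /imsetP [a aA ->]; exact: phiA.
  transitivity (\sum_(a in A) u *m rG (phi a * c)%g)%R.
    apply: eq_bigr => a _; congr (_ *m rG _)%R.
    by rewrite conjgE /phi -!mulgA mulVg mulg1.
  rewrite -(big_imset (fun b => u *m rG (b * c)%g)%R injphi) imphi.
  transitivity (\sum_(b in A) u *m rG b *m rG c)%R.
    by apply: eq_bigr => b bA; rewrite repr_mxM ?cL ?(subsetP sAL b bA) ?mulmxA.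
  by rewrite -mulmx_suml sum_zero // mul0mx.
have tot : (\sum_(a in A) \sum_(c in <[y]>) u *m rG (c ^ a)%g = u *+ #|A|)%R.
  have rest : (\sum_(c in <[y]> | c != 1%g) \sum_(a in A) u *m rG (c ^ a)%g = 0)%R.
    by apply: big1 => c /andP [cy nt1]; apply: S2.
  rewrite exchange_big (bigD1 1) ?group1 // rest Monoid.simpm.
  rewrite -sumr_const; apply: eq_bigr => a _.
  by rewrite conj1g repr_mx1 mulmx1.
move: tot; rewrite big1 => [|a aA]; last exact: S1.
move/esym/eqP; rewrite -scaler_nat scaler_eq0 -(dvdn_pcharf (pchar_Fp pr_p)).
rewrite (negPf pA) /= /u -(abelem_rV_1 abelE ntE) => /eqP /(abelem_rV_inj xE (group1 _)).
by move/eqP; rewrite (negPf ntx).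
Qed.

End KeyS.

Section Main.
Variable gT : finGroupType.

Lemma mixed (x y : gT) : commute x y -> coprime #[x] #[y] -> x != 1 -> y != 1 ->
  (1 < size (primes #[x * y]))%N.
Proof.
move=> cxy co ntx nty.
set m := #[x * y].
have h : x ^+ m * y ^+ m == 1 by rewrite -expgMn // expg_order.
have xm1 : x ^+ m = 1.
  have : x ^+ m \in <[x]> :&: <[y]>.
    rewrite inE mem_cycle /=; move: h; rewrite -eq_invg_mul => /eqP e.
    by rewrite -[x ^+ m]invgK e groupV mem_cycle.
  by rewrite coprime_TIg // inE => /eqP.
have ym1 : y ^+ m = 1 by move: h; rewrite xm1 mul1g => /eqP.
have dx : (#[x] %| m)%N by rewrite order_dvdn xm1.
have dy : (#[y] %| m)%N by rewrite order_dvdn ym1.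
have px' : prime (pdiv #[x]) by apply: pdiv_prime; rewrite order_gt1.
have py' : prime (pdiv #[y]) by apply: pdiv_prime; rewrite order_gt1.
have ne : pdiv #[x] != pdiv #[y].
  apply/eqP => e.
  have := coprime_dvdl (pdiv_dvd #[x]) (coprime_dvdr (pdiv_dvd #[y]) co).
  by rewrite e prime_coprime // dvdnn.
have m0 : (0 < m)%N by apply: order_gt0.
apply: (@uniq_leq_size _ [:: pdiv #[x]; pdiv #[y]]).
  by rewrite /= inE ne.
move=> z; rewrite !inE => /orP [] /eqP ->; rewrite mem_primes ?px' ?py' m0 /=.
  exact: dvdn_trans (pdiv_dvd _) dx.
exact: dvdn_trans (pdiv_dvd _) dy.
Qed.

Lemma eppo_two (H : {group gT}) : solvable H ->
  {in H, forall g, (size (primes #[g]) <= 1)%N} -> (size (primes #|H|) <= 2)%N.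
Proof.
move=> solH eppo; rewrite leqNgt; apply/negP => big3.
have noMix : forall a b, a \in H -> b \in H -> commute a b -> coprime #[a] #[b] ->
    a != 1 -> b != 1 -> False.
  move=> a b aH bH cab co nta ntb.
  by have := mixed cab co nta ntb; rewrite ltnNge eppo ?groupM.
case: (eqVneq (H : {set gT}) 1) => [H1|ntH].
  by move: big3; rewrite H1 cards1.
have [N minN sNH] := minnormal_exists ntH (normG H).
have [nNH ntN /is_abelemP [p pr_p abelN]] := minnormal_solvable minN sNH solH.
have [L hallL] := Hall_exists p^' solH.
have sLH := pHall_sub hallL.
have p'L := pHall_pgroup hallL.
have nNL : L \subset 'N(N) := subset_trans sLH nNH.
have size2 : (2 <= size (primes #|L|))%N.
  rewrite (card_Hall hallL) primes_part size_filter.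
  have e : count (fun z => z \in p^') (primes #|H|) + count_mem p (primes #|H|)
      = size (primes #|H|).
    rewrite -(count_predC (fun z => z \in p^')); congr (_ + _).
    by apply: eq_count => z; rewrite /= !inE negbK.
  rewrite count_uniq_mem ?primes_uniq // in e.
  move: e big3; case: (p \in primes #|H|) => /=; lia.
have : uniq (primes #|L|) := primes_uniq _.
have mq : forall q, q \in primes #|L| -> prime q /\ (q %| #|L|)%N.
  by move=> q; rewrite mem_primes => /and3P [].
move: size2 mq; case: (primes #|L|) => [|q1 [|q2 t]] //= _ mq.
rewrite !inE negb_or => /andP [/andP [ne12 _] _].
have [pq1 dq1] := mq q1 (mem_head _ _).
have [pq2 dq2] : prime q2 /\ (q2 %| #|L|)%N by apply: mq; rewrite !inE eqxx orbT.
have ntL : L :!=: 1.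
  apply/eqP => L1; move: dq1; rewrite L1 cards1 dvdn1 => /eqP q11.
  by move: pq1; rewrite q11.
have [M minM sML] := minnormal_exists ntL (normG L).
have solL := solvableS sLH solH.
have [nML ntM /is_abelemP [s pr_s abelM]] := minnormal_solvable minM sML solL.
have [r [pr_r dr rs]] : exists r, [/\ prime r, (r %| #|L|)%N & r != s].
  case: (eqVneq q1 s) => [e|]; last by exists q1.
  by exists q2; split => //; rewrite -e eq_sym.
have [y yL oy] := Cauchy pr_r dr.
have nty : y != 1.
  by apply/eqP => y1; move: oy; rewrite y1 order1 => r1; move: pr_r; rewrite -r1.
have sMH := subset_trans sML sLH.
have hC : forall g, g \in L -> g != 1 -> 'C_N[g] = 1.
  move=> g gL ntg; apply/trivgP/subsetP => n /setIP [nN /cent1P cng].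
  rewrite inE; apply/negPn/negP => ntn; apply: (noMix n g) => //.
  - exact: (subsetP sNH).
  - exact: (subsetP sLH).
  rewrite (abelem_order_p abelN nN ntn).
  exact: pnat_coprime (pnat_id pr_p) (mem_p_elt p'L gL).
have pA : ~~ (p %| #|M|).
  by rewrite -prime_coprime // (pnat_coprime (pnat_id pr_p) (pgroupS sML p'L)).
have nMy : y \in 'N(M) := subsetP nML y yL.
have hA : forall c a, c \in <[y]> -> c != 1 -> a \in M -> commute a c -> a = 1.
  move=> c a cy ntc aM cac; apply/eqP/negPn/negP => nta.
  have cL : c \in L by apply: (subsetP _ c cy); rewrite cycle_subG.
  apply: (noMix a c) => //.
  - exact: (subsetP sMH).
  - exact: (subsetP sLH).
  rewrite (abelem_order_p abelM aM nta).
  have dc : (#[c] %| r)%N by rewrite -oy; apply: order_dvdG.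
  apply: (coprime_dvdr dc).
  by rewrite prime_coprime // dvdn_prime2 // eq_sym.
exact: (key pr_p abelN ntN nNL hC sML ntM pA yL nty nMy hA).
Qed.

End Main.

Theorem corollary2p2 (gT : finGroupType) (G : {group gT}) :
  solvable G -> isolated_set G != G :> {set gT} -> Sigma G != set0.
Proof.
move=> solG neq; apply/negP => /eqP S0.
have eppo : {in G, forall g, (size (primes #[g]) <= 1)%N}.
  move=> g gG; rewrite leqNgt; apply/negP => h.
  have : g \in Sigma G by rewrite inE gG h.
  by rewrite S0 inE.
have subI : isolated_set G \subset G.
  by apply/subsetP => z; rewrite inE => /andP [].
move: neq; rewrite eqEsubset subI /= => /subsetPn [x xG].
rewrite inE xG /= => /forall_inPn [y yG] /negPn /andP [_ big].
have sHG : <<[set x; y]>> \subset G.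
  by rewrite gen_subG; apply/subsetP => z /set2P [->|->].
have := eppo_two (solvableS sHG solG) (fun g gH => eppo g (subsetP sHG g gH)).
by rewrite leqNgt big.
Qed.
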